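(* Let $(\mathfrak{g},\langle\cdot,\cdot\rangle)$ be a pseudo-Euclidean unimodular Lie algebra admitting a derivation with nonzero trace. Then $(\mathfrak{g},\langle\cdot,\cdot\rangle)$ is Einstein if and only if it is Ricci-flat.
   Context: A pseudo-Euclidean Lie algebra is a finite-dimensional real Lie algebra $\mathfrak{g}$ with a nondegenerate symmetric bilinear form $\langle\cdot,\cdot\rangle$ (equivalently, a left-invariant pseudo-Riemannian metric on a corresponding Lie group). Unimodular means $\mathrm{tr}(\mathrm{ad}_u)=0$ for all $u\in\mathfrak{g}$. The Levi-Civita product $\mathrm{L}$ is defined by $2\langle \mathrm{L}_uv,w\rangle=\langle[u,v],w\rangle+\langle[w,u],v\rangle+\langle[w,v],u\rangle$; the curvature is $K(u,v)=\mathrm{L}_{[u,v]}-[\mathrm{L}_u,\mathrm{L}_v]$; the Ricci curvature is $\mathrm{ric}(u,v)=\mathrm{tr}(w\mapsto K(u,w)v)$ and the Ricci operator $\mathrm{Ric}$ is defined by $\langle\mathrm{Ric}(u),v\rangle=\mathrm{ric}(u,v)$. The algebra is Einstein if $\mathrm{Ric}=\lambda\,\mathrm{Id}_{\mathfrak{g}}$ for some $\lambda\in\mathbb{R}$, and Ricci-flat if $\mathrm{Ric}=0$. *)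

(* Defs.v *)
(* A finite-dimensional real Lie algebra is modelled as
   R^n (row vectors 'rV[R]_n, R : realType) with a bracket satisfying the
   Lie algebra axioms; the pseudo-Euclidean metric is <u,v> = u B v^T with
   B symmetric and invertible (nondegenerate). *)
From HB Require Import structures.
From mathcomp Require Import all_boot all_order all_algebra.
From mathcomp Require Import reals.
Set Implicit Arguments. Unset Strict Implicit. Unset Printing Implicit Defensive.
Import Order.TTheory GRing.Theory Num.Theory.
Local Open Scope ring_scope.

Section LieDefs.
Variables (R : realType) (n : nat).
Notation V := 'rV[R]_n.

(* Lie bracket axioms: bilinear (left linearity + antisymmetry), Jacobi. *)
Definition is_lie_bracket (br : V -> V -> V) : Prop :=
  [/\ forall (a : R) (u v w : V), br (a *: u + v) w = a *: br u w + br v w,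
      forall u v : V, br u v = - br v u
    & forall u v w : V, br u (br v w) + br v (br w u) + br w (br u v) = 0].

Definition is_pseudo_metric (B : 'M[R]_n) : Prop :=
  B^T = B /\ B \in unitmx.

Definition ip (B : 'M[R]_n) (u v : V) : R := (u *m B *m v^T) 0 0.

Definition ev (j : 'I_n) : V := delta_mx 0 j.

Definition ad (br : V -> V -> V) (u : V) : 'M[R]_n := lin1_mx (br u).

Definition unimodular (br : V -> V -> V) : Prop :=
  forall u : V, \tr (ad br u) = 0.

Definition is_derivation (br : V -> V -> V) (D : 'M[R]_n) : Prop :=
  forall u v : V, br u v *m D = br (u *m D) v + br u (v *m D).

(* Levi-Civita product: the unique L_u v with
   2 <L_u v, w> = <[u,v],w> + <[w,u],v> + <[w,v],u> for all w. *)
Definition LC (B : 'M[R]_n) (br : V -> V -> V) (u v : V) : V :=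
  (2%:R)^-1 *: ((\row_j (ip B (br u v) (ev j) + ip B (br (ev j) u) v
                        + ip B (br (ev j) v) u)) *m invmx B).

Definition curv (B : 'M[R]_n) (br : V -> V -> V) (u v w : V) : V :=
  LC B br (br u v) w - (LC B br u (LC B br v w) - LC B br v (LC B br u w)).

Definition ric (B : 'M[R]_n) (br : V -> V -> V) (u v : V) : R :=
  \tr (lin1_mx (fun w => curv B br u w v)).

(* Ricci operator: <Ric u, v> = ric(u,v) *)
Definition Ric (B : 'M[R]_n) (br : V -> V -> V) (u : V) : V :=
  (\row_j ric B br u (ev j)) *m invmx B.

Definition einstein (B : 'M[R]_n) (br : V -> V -> V) : Prop :=
  exists lambda : R, forall u : V, Ric B br u = lambda *: u.

Definition ricci_flat (B : 'M[R]_n) (br : V -> V -> V) : Prop :=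
  forall u : V, Ric B br u = 0.

End LieDefs.

(* Main.v *)
Require Import Defs.
From HB Require Import structures.
From mathcomp Require Import all_boot all_order all_algebra.
From mathcomp Require Import reals.
From mathcomp Require Import ring lra.
Set Implicit Arguments. Unset Strict Implicit. Unset Printing Implicit Defensive.
Import Order.TTheory GRing.Theory Num.Theory.
Local Open Scope ring_scope.

Section Pf.
Variables (R : realType) (n : nat) (br : 'rV[R]_n -> 'rV[R]_n -> 'rV[R]_n) (B : 'M[R]_n).
Hypothesis hlin : forall (a : R) (u v w : 'rV[R]_n), br (a *: u + v) w = a *: br u w + br v w.
Hypothesis hanti : forall u v, br u v = - br v u.
Hypothesis hBs : B^T = B.
Hypothesis hBu : B \in unitmx.

Local Notation V := 'rV[R]_n.
Local Notation Bi := (invmx B).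
Local Notation e := (@ev R n).

Lemma BiT : Bi^T = Bi. Proof. by rewrite trmx_inv hBs. Qed.
Lemma BBi : B *m Bi = 1%:M. Proof. exact: mulmxV. Qed.
Lemma BiB : Bi *m B = 1%:M. Proof. exact: mulVmx. Qed.

Definition star (M : 'M[R]_n) := B *m M^T *m Bi.
Definition dual (i : 'I_n) : V := e i *m Bi.

Lemma star_star M : star (star M) = M.
Proof.
rewrite /star !trmx_mul trmxK BiT hBs !mulmxA BBi mul1mx -!mulmxA BBi mulmx1 //.
Qed.

Lemma star_mul M N : star (M *m N) = star N *m star M.
Proof.
rewrite /star trmx_mul !mulmxA -[B *m N^T *m Bi *m B]mulmxA BiB mulmx1 //.
Qed.

Lemma starL a M N : star (a *: M + N) = a *: star M + star N.
Proof. by rewrite /star linearD linearZ /= mulmxDr mulmxDl -!scalemxAr -!scalemxAl. Qed.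

Lemma starN M : star (- M) = - star M.
Proof. by rewrite /star linearN /= mulmxN mulNmx. Qed.

Lemma starD M N : star (M + N) = star M + star N.
Proof. by rewrite /star linearD /= mulmxDr mulmxDl. Qed.

Lemma star1 : star 1%:M = 1%:M.
Proof. by rewrite /star trmx1 mulmx1 BBi. Qed.

Lemma tr_star M : \tr (star M) = \tr M.
Proof. by rewrite /star mxtrace_mulC mulmxA BiB mul1mx mxtrace_tr. Qed.

Lemma ipC x y : ip B x y = ip B y x.
Proof.
have h (M : 'M[R]_1) : M 0 0 = M^T 0 0 by rewrite mxE.
by rewrite /ip [RHS]h !trmx_mul trmxK hBs mulmxA.
Qed.

Lemma ipA x y M : ip B (x *m M) y = ip B x (y *m star M).
Proof.
rewrite /ip /star !trmx_mul BiT trmxK hBs !mulmxA.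
by rewrite -[x *m B *m Bi]mulmxA BBi mulmx1.
Qed.

Lemma ip_dual x i : ip B x (dual i) = x 0 i.
Proof.
rewrite /ip /dual /ev trmx_mul BiT mulmxA -[x *m B *m Bi]mulmxA BBi mulmx1.
by rewrite trmx_delta -colE mxE.
Qed.

Lemma ip_ev x i : ip B x (e i) = (x *m B) 0 i.
Proof. by rewrite /ip /ev trmx_delta -colE mxE. Qed.

Lemma evM i (M : 'M[R]_n) j : (e i *m M) 0 j = M i j.
Proof. by rewrite /ev -rowE mxE. Qed.

Lemma trE M : \tr M = \sum_i ip B (e i *m M) (dual i).
Proof. by rewrite /mxtrace; apply: eq_bigr => i _; rewrite ip_dual evM. Qed.

Lemma T1 P Q : \sum_i ip B (e i *m P) (dual i *m Q) = \tr (P *m star Q).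
Proof.
rewrite trE; apply: eq_bigr => i _.
by rewrite ipC ipA ipC mulmxA.
Qed.

Lemma T2 P Q : \sum_i ip B (dual i *m P) (e i *m Q) = \tr (P *m star Q).
Proof.
under eq_bigr do rewrite ipC.
by rewrite T1 -tr_star star_mul star_star.
Qed.

Lemma ipN x y : ip B (- x) (- y) = ip B x y.
Proof. rewrite /ip mulNmx linearN /= mulmxN mulNmx opprK //. Qed.


Lemma lin_sum_v m (f : V -> 'rV[R]_m) :
  (forall a x y, f (a *: x + y) = a *: f x + f y) ->
  forall (c : 'I_n -> R), f (\sum_i c i *: e i) = \sum_i c i *: f (e i).
Proof.
move=> hf c.
have f0 : f 0 = 0.
  have := hf 1 0 0; rewrite !scale1r addr0 => h.
  by apply: (addrI (f 0)); rewrite addr0 -h.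
apply: (big_ind2 (fun x y => f x = y)) => //.
  move=> x1 x2 y1 y2 h1 h2; rewrite -h1 -h2.
  by have := hf 1 x1 y1; rewrite !scale1r.
by move=> i _; rewrite -[_ *: e i]addr0 hf f0 addr0.
Qed.

Lemma lin_sum_s (f : V -> R) :
  (forall a x y, f (a *: x + y) = a * f x + f y) ->
  forall (c : 'I_n -> R), f (\sum_i c i *: e i) = \sum_i c i * f (e i).
Proof.
move=> hf c.
have f0 : f 0 = 0.
  have := hf 1 0 0; rewrite scale1r addr0 mul1r => h.
  by apply: (addrI (f 0)); rewrite addr0 -h.
apply: (big_ind2 (fun x y => f x = y)) => //.
  move=> x1 x2 y1 y2 h1 h2; rewrite -h1 -h2.
  by have := hf 1 x1 y1; rewrite scale1r mul1r.
by move=> i _; rewrite -[_ *: e i]addr0 hf f0 addr0.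
Qed.

Lemma mul_lin1' m (f : V -> 'rV[R]_m) :
  (forall a x y, f (a *: x + y) = a *: f x + f y) ->
  forall y, y *m lin1_mx f = f y.
Proof.
move=> hf y; rewrite [in RHS](row_sum_delta y) lin_sum_v // {1}(row_sum_delta y).
rewrite mulmx_suml; apply: eq_bigr => i _.
rewrite -scalemxAl; congr (_ *: _); rewrite -rowE; apply/rowP => j.
by rewrite !mxE.
Qed.

Lemma dualE i : dual i = \sum_j Bi i j *: e j.
Proof.
rewrite /dual /ev -rowE {1}(row_sum_delta (row i Bi)).
by apply: eq_bigr => j _; rewrite mxE.
Qed.

Lemma swap (phi : V -> V -> R) :
  (forall x a y z, phi x (a *: y + z) = a * phi x y + phi x z) ->
  (forall y a x z, phi (a *: x + z) y = a * phi x y + phi z y) ->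
  \sum_i phi (e i) (dual i) = \sum_i phi (dual i) (e i).
Proof.
move=> h2 h1.
under eq_bigr do rewrite dualE lin_sum_s //.
under [RHS]eq_bigr do rewrite dualE (lin_sum_s (f := fun x => phi x _)) //.
rewrite exchange_big /=; apply: eq_bigr => i _; apply: eq_bigr => j _.
have hs : Bi j i = Bi i j by rewrite -[in RHS]BiT mxE.
by rewrite hs.
Qed.

Lemma brR x : forall a y z, br x (a *: y + z) = a *: br x y + br x z.
Proof. by move=> a y z; rewrite hanti hlin opprD -scalerN -!hanti. Qed.

Definition Ad x := ad br x.

Lemma adE x y : y *m Ad x = br x y.
Proof. exact: mul_lin1' (brR x) y. Qed.

Lemma AdL a x y : Ad (a *: x + y) = a *: Ad x + Ad y.
Proof. by apply/matrixP => i j; rewrite !mxE hlin !mxE. Qed.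

Lemma mx_ext (M N : 'M[R]_n) : (forall w : V, w *m M = w *m N) -> M = N.
Proof. by move=> h; apply/row_matrixP => i; rewrite !rowE h. Qed.

Lemma vec_ext (u v : V) : (forall z, ip B z u = ip B z v) -> u = v.
Proof. by move=> h; apply/rowP => i; rewrite -!ip_dual ipC h ipC. Qed.

Lemma flip u v x y : ip B (u *m Ad x) (v *m Ad y) = ip B (x *m Ad u) (y *m Ad v).
Proof. by rewrite !adE hanti [br y v]hanti -!adE ipN. Qed.


Lemma ipNl x y : ip B (- x) y = - ip B x y.
Proof. by rewrite /ip !mulNmx mxE. Qed.
Lemma ipNr x y : ip B x (- y) = - ip B x y.
Proof. by rewrite ipC ipNl ipC. Qed.

Lemma ipA' x y M : ip B (x *m star M) y = ip B x (y *m M).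
Proof. by rewrite ipA star_star. Qed.

Definition Tm x := lin1_mx (fun w => x *m star (Ad w)).

Lemma TmE w x : w *m Tm x = x *m star (Ad w).
Proof.
apply: mul_lin1' => a y z.
by rewrite (AdL a y z) starL mulmxDr -scalemxAr.
Qed.

Lemma Tm_skew x : star (Tm x) = - Tm x.
Proof.
apply: mx_ext => w; apply: vec_ext => z.
rewrite -ipA TmE. rewrite (ipA' x w (Ad z)).
rewrite adE mulmxN TmE ipNr (ipC z) (ipA' x z (Ad w)) adE.
by rewrite [br w z]hanti ipNr opprK.
Qed.

Lemma tr_Tm x : \tr (Tm x) = 0.
Proof.
have h : \tr (Tm x) = - \tr (Tm x) by rewrite -{1}tr_star Tm_skew linearN.
by apply/eqP; rewrite -(eqr_opp) -h; apply/eqP; lra.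
Qed.

Lemma LCE u v : LC B br u v = 2^-1 *: (v *m Ad u - v *m star (Ad u) - u *m star (Ad v)).
Proof.
rewrite /LC; congr (_ *: _).
set X := (v *m Ad u - _ - _).
suff -> : (\row_j (ip B (br u v) (ev R j) + ip B (br (ev R j) u) v + ip B (br (ev R j) v) u)) = X *m B.
  by rewrite -mulmxA BBi mulmx1.
apply/rowP => j; rewrite mxE.
rewrite ip_ev -adE [br (ev R j) u]hanti [br (ev R j) v]hanti -!adE !ipNl !ipA.
rewrite !(ipC (e j)) !ip_ev /X !mulmxBl.
by rewrite !mxE.
Qed.


Hypothesis hun : forall u : V, \tr (ad br u) = 0.

Definition Lm u := 2^-1 *: (Ad u - star (Ad u) - Tm u).
Definition Rho x := - (2^-1 *: (Ad x + star (Ad x) + Tm x)).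

Lemma LCl u v : LC B br u v = v *m Lm u.
Proof. by rewrite LCE /Lm -scalemxAr !mulmxBr TmE. Qed.

Lemma LCr w x : LC B br w x = w *m Rho x.
Proof.
rewrite LCE /Rho mulmxN -scalemxAr -scalerN !mulmxDr.
rewrite adE hanti -adE -TmE; congr (_ *: _).
by rewrite !opprD -addrA [(- (w *m Tm x)) + _]addrC addrA.
Qed.

Lemma tors u : Ad u - Lm u = - Rho u.
Proof.
apply/eqP; rewrite subr_eq /Rho opprK /Lm -scalerDr.
set a := Ad u; set b := star a; set c := Tm u.
rewrite addrACA subrr addr0 addrACA subrr addr0 -mulr2n -scaler_nat scalerA.
by rewrite mulVf ?scale1r // pnatr_eq0.
Qed.

Lemma lin1_ext (f : V -> V) M : (forall w, f w = w *m M) -> lin1_mx f = M.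
Proof. by move=> h; apply/matrixP => i j; rewrite mxE h -rowE mxE. Qed.

Lemma tr_Rho x : \tr (Rho x) = 0.
Proof.
by rewrite /Rho linearN /= mxtraceZ !mxtraceD tr_star tr_Tm /Ad hun !addr0 mulr0 oppr0.
Qed.

Lemma ricE u v : ric B br u v = - \tr (Rho v *m Rho u).
Proof.
rewrite /ric (@lin1_ext _ (Ad u *m Rho v - Rho v *m Lm u + Rho (LC B br u v))); last first.
  move=> w; rewrite /curv (LCr (br u w)) (LCl u (LC B br w v)) (LCr w v) (LCr w (LC B br u v)) -adE.
  by rewrite mulmxDr mulmxBr !mulmxA opprB addrA [RHS]addrAC.
rewrite linearD linearB /= tr_Rho addr0 (mxtrace_mulC (Ad u)) -linearB /= -mulmxBr tors.
by rewrite mulmxN linearN.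
Qed.


Lemma cross P Q : star P = P -> star Q = - Q -> \tr (P *m Q) = 0.
Proof.
move=> hP hQ.
have h : \tr (P *m Q) = - \tr (P *m Q).
  by rewrite -{1}tr_star star_mul hP hQ mulNmx linearN /= mxtrace_mulC.
by apply/eqP; rewrite -(eqr_opp) -h; apply/eqP; lra.
Qed.

Definition S x := Ad x + star (Ad x).
Lemma S_sym x : star (S x) = S x.
Proof. by rewrite /S starD star_star addrC. Qed.

Lemma trSS P Q : \tr ((P + star P) *m (Q + star Q)) =
  2%:R * (\tr (P *m Q) + \tr (P *m star Q)).
Proof.
rewrite mulmxDr !mulmxDl !mxtraceD.
have h1 : \tr (star P *m star Q) = \tr (P *m Q) by rewrite -star_mul tr_star mxtrace_mulC.
have h2 : \tr (star P *m Q) = \tr (P *m star Q).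
  by rewrite -tr_star star_mul star_star mxtrace_mulC.
rewrite h1 h2; lra.
Qed.

Lemma trTT a b : \tr (Tm a *m Tm b) = - \sum_i ip B (a *m star (Ad (e i))) (b *m star (Ad (dual i))).
Proof.
rewrite trE -sumrN; apply: eq_bigr => i _.
by rewrite mulmxA ipA Tm_skew mulmxN ipNr !TmE.
Qed.

Lemma trRR a b : \tr (Rho a *m Rho b) = 4%:R^-1 * \tr ((S a + Tm a) *m (S b + Tm b)).
Proof.
rewrite /Rho /S mulmxN mulNmx opprK -scalemxAl -scalemxAr !mxtraceZ mulrA.
congr (_ * _); rewrite -invfM; congr (_^-1); rewrite -natrM //.
Qed.

Lemma trPT P Q X Y : star P = P -> star Q = Q -> star X = - X -> star Y = - Y ->
  \tr ((P + X) *m (Q + Y)) = \tr (P *m Q) + \tr (X *m Y).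
Proof.
move=> hP hQ hX hY.
rewrite mulmxDr !mulmxDl !mxtraceD (cross hP hY) (mxtrace_mulC X) (cross hQ hX).
by rewrite addr0 add0r.
Qed.

Lemma trST a b : \tr ((S a + Tm a) *m (S b + Tm b)) =
  2%:R * (\tr (Ad a *m Ad b) + \tr (Ad a *m star (Ad b))) + \tr (Tm a *m Tm b).
Proof.
by rewrite trPT ?S_sym ?Tm_skew // /S trSS.
Qed.

Section WithD.
Variable D : 'M[R]_n.
Hypothesis hD : is_derivation br D.

Lemma AdD x : Ad (x *m D) = Ad x *m D - D *m Ad x.
Proof.
apply: mx_ext => w.
by rewrite adE mulmxBr !mulmxA !adE hD addrK.
Qed.

Lemma sum_swap1 : \sum_j \tr (D *m Ad (e j) *m Ad (dual j)) = \sum_j \tr (D *m Ad (dual j) *m Ad (e j)).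
Proof.
apply: (swap (phi := fun x y => \tr (D *m Ad x *m Ad y))) => x a y z /=.
  by rewrite (AdL a y z) mulmxDr -scalemxAr mxtraceD mxtraceZ.
by rewrite (AdL a y z) mulmxDr mulmxDl -scalemxAr -scalemxAl mxtraceD mxtraceZ.
Qed.

Lemma sum_swap2 : \sum_j \tr (D *m Ad (e j) *m star (Ad (dual j))) = \sum_j \tr (D *m Ad (dual j) *m star (Ad (e j))).
Proof.
apply: (swap (phi := fun x y => \tr (D *m Ad x *m star (Ad y)))) => x a y z /=.
  by rewrite (AdL a y z) starL mulmxDr -scalemxAr mxtraceD mxtraceZ.
by rewrite (AdL a y z) mulmxDr mulmxDl -scalemxAr -scalemxAl mxtraceD mxtraceZ.
Qed.

Definition DY := \sum_j \tr (Ad (dual j) *m D *m star (Ad (e j))).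
Definition DX := \sum_j \tr (D *m Ad (dual j) *m star (Ad (e j))).

Lemma K0 : \sum_j \tr (Ad (dual j *m D) *m Ad (e j)) = 0.
Proof.
rewrite (eq_bigr (fun j => \tr (D *m Ad (e j) *m Ad (dual j)) - \tr (D *m Ad (dual j) *m Ad (e j)))); last first.
  move=> j _; rewrite AdD mulmxBl linearB /= -[Ad (dual j) *m D *m _]mulmxA.
  by rewrite (mxtrace_mulC (Ad (dual j))).
by rewrite sumrB sum_swap1 subrr.
Qed.

Lemma K1 : \sum_j \tr (Ad (dual j *m D) *m star (Ad (e j))) = DY - DX.
Proof.
under eq_bigr do rewrite AdD mulmxBl linearB /=.
by rewrite sumrB.
Qed.

Lemma K2 : \sum_j \tr (Ad (dual j *m D) *m star (Ad (e j))) = DX.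
Proof.
under eq_bigr do rewrite -T1.
under eq_bigr do under eq_bigr do rewrite flip -mulmxA.
rewrite exchange_big /=.
under eq_bigr do rewrite T2.
by rewrite sum_swap2.
Qed.

Lemma K3 : \sum_j \tr (Tm (dual j *m D) *m Tm (e j)) = - DY.
Proof.
under eq_bigr do rewrite trTT.
rewrite sumrN exchange_big /=; congr (- _).
under eq_bigr do under eq_bigr do rewrite -mulmxA.
under eq_bigr do rewrite T2 star_star.
apply: eq_bigr => i _.
by rewrite mxtrace_mulC mulmxA.
Qed.

Lemma key : \sum_j ric B br (dual j *m D) (e j) = 0.
Proof.
under eq_bigr do rewrite ricE mxtrace_mulC trRR trST.
rewrite sumrN -mulr_sumr big_split /= -mulr_sumr big_split /= K0 K3.
have := K1; rewrite K2 => h.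
have -> : DY = 2%:R * DX by lra.
lra.
Qed.

End WithD.


Lemma ric_ev u j : ric B br u (e j) = (Ric B br u *m B) 0 j.
Proof. by rewrite /Ric -mulmxA BiB mulmx1 mxE. Qed.

Lemma main_sec (hDex : exists D : 'M[R]_n, is_derivation br D /\ \tr D != 0) :
  einstein B br <-> ricci_flat B br.
Proof.
case: hDex => D [hD htr]; split; last by move=> h; exists 0 => u; rewrite h scale0r.
move=> [l hl].
suff l0 : l = 0 by move=> u; rewrite hl l0 scale0r.
have := @key D hD.
under eq_bigr do rewrite ric_ev hl -scalemxAl mxE.
rewrite -mulr_sumr.
have -> : \sum_i (dual i *m D *m B) 0 i = \tr D.
  transitivity (\tr (Bi *m (D *m B))).
    by apply: eq_bigr => i _; rewrite /dual -!mulmxA evM.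
  by rewrite mxtrace_mulC -mulmxA BBi mulmx1.
by move/eqP; rewrite mulf_eq0 (negbTE htr) orbF => /eqP.
Qed.

End Pf.

Unset Implicit Arguments.

Theorem proposition3p2 (R : realType) (n : nat)
    (br : 'rV[R]_n -> 'rV[R]_n -> 'rV[R]_n) (B : 'M[R]_n) :
  is_lie_bracket br -> is_pseudo_metric B -> unimodular br ->
  (exists D : 'M[R]_n, is_derivation br D /\ \tr D != 0) ->
  (einstein B br <-> ricci_flat B br).
Proof.
move=> [h1 h2 _] [hBs hBu] hun hD.
by apply: main_sec.
Qed.
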